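(* Let $\mathcal V=\{v^{(1)},\dots,v^{(p)}\}\subset(\mathbb{R}\cup\{-\infty\})^n$, none identically $-\infty$, let $V$ be the matrix with columns $v^{(k)}$, with no row identically $-\infty$, and let $E=\{(i,k):V_{ik}\neq-\infty\}$. Let $$T_i(x)=\inf_{k\in[p],\,(i,k)\in E}\Big[-V_{ik}+\max_{j\in[n],\,j\neq i}(V_{jk}+x_j)\Big],\qquad i\in[n].$$ Let $a\in\mathbb{R}^n$ satisfy $T(a)=-\operatorname{inrad}(\mathcal V)+a$, and let $\sigma:[n]\to[p]$ be a map such that $(i,\sigma(i))\in E$ for all $i\in[n]$. Define $T^\sigma_i(x)=-V_{i\sigma(i)}+\max_{j\in[n],\,j\neq i}(V_{j\sigma(i)}+x_j)$. Then $T(a)=T^\sigma(a)$ if and only if for every $i\in[n]$, the column $V_{\cdot\sigma(i)}$ belongs to the sector $S_i(a)$ and satisfies $\operatorname{dist}_H(V_{\cdot\sigma(i)},\mathcal H_a)=\operatorname{dist}_H(\mathcal V,\mathcal H_a)$.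
   Context: $\mathbb{R}_{\max}=\mathbb{R}\cup\{-\infty\}$, $-\infty+c=-\infty$, $\max\emptyset=-\infty$. $\operatorname{inrad}(\mathcal V)$ is the supremum of radii $r$ of Hilbert balls $B(c,r)=\{x:d(c,x)\le r\}$, $c\in\mathbb{R}^n$, included in the tropical cone generated by $\mathcal V$, where $d(x,y)=\inf\{\lambda-\mu:\lambda,\mu\in\mathbb{R},\ \mu+y_j\le x_j\le\lambda+y_j\ \forall j\}$ is Hilbert's projective metric. $\mathcal H_a=\{y:\max_i(a_i+y_i)\text{ achieved at least twice}\}$; $S_i(a)=\{x: x_i+a_i\ge x_j+a_j\ \forall j\}$; $\operatorname{dist}_H(x,B)=\inf_{y\in B}d(x,y)$, $\operatorname{dist}_H(A,B)=\sup_{x\in A}\operatorname{dist}_H(x,B)$. *)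

(* Defs.v *)
(* R_max = \bar R restricted to values < +oo. *)
From HB Require Import structures.
From mathcomp Require Import all_boot all_order all_algebra.
From mathcomp Require Import boolp classical_sets reals constructive_ereal ereal.
Set Implicit Arguments. Unset Strict Implicit. Unset Printing Implicit Defensive.
Import Order.TTheory GRing.Theory Num.Theory.
Local Open Scope classical_set_scope.
Local Open Scope ereal_scope.

Section TropDefs.
Variables (R : realType) (n p : nat).

Definition rmax_elt (x : \bar R) : Prop := x != +oo.

Definition embv (c : 'I_n -> R) : 'I_n -> \bar R := fun j => (c j)%:E.

(* Hilbert's projective metric, inf over real lambda, mu (inf of empty = +oo) *)
Definition hilbert (x y : 'I_n -> \bar R) : \bar R :=
  ereal_inf [set e | exists lam mu : R,
    (forall j, (mu%:E + y j <= x j) /\ (x j <= lam%:E + y j)) /\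
    e = (lam - mu)%:E].

Definition trop_cone (V : 'I_n -> 'I_p -> \bar R) : set ('I_n -> \bar R) :=
  [set x | exists lam : 'I_p -> \bar R, (forall k, rmax_elt (lam k)) /\
      forall j, x j = \big[Order.max/-oo]_(k < p) (lam k + V j k)].

Definition hball (c : 'I_n -> R) (r : R) : set ('I_n -> R) :=
  [set x | hilbert (embv c) (embv x) <= r%:E].

Definition inrad (V : 'I_n -> 'I_p -> \bar R) : \bar R :=
  ereal_sup [set r%:E | r in [set r : R | (0 <= r)%R /\ exists c : 'I_n -> R,
      forall x, hball c r x -> trop_cone V (embv x)]].

Definition trop_hyp (a : 'I_n -> R) : set ('I_n -> \bar R) :=
  [set y | (forall j, rmax_elt (y j)) /\
     exists i1 i2 : 'I_n, i1 != i2 /\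
       (a i1)%:E + y i1 = \big[Order.max/-oo]_(j < n) ((a j)%:E + y j) /\
       (a i2)%:E + y i2 = \big[Order.max/-oo]_(j < n) ((a j)%:E + y j)].

Definition sector (a : 'I_n -> R) (i : 'I_n) : set ('I_n -> \bar R) :=
  [set x | forall j, x j + (a j)%:E <= x i + (a i)%:E].

Definition distH (x : 'I_n -> \bar R) (B : set ('I_n -> \bar R)) : \bar R :=
  ereal_inf [set hilbert x y | y in B].

Definition distH_set (A B : set ('I_n -> \bar R)) : \bar R :=
  ereal_sup [set distH x B | x in A].

Definition vcol (V : 'I_n -> 'I_p -> \bar R) (k : 'I_p) : 'I_n -> \bar R :=
  fun j => V j k.

Definition vcols (V : 'I_n -> 'I_p -> \bar R) : set ('I_n -> \bar R) :=
  [set vcol V k | k in [set: 'I_p]].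

Definition Top (V : 'I_n -> 'I_p -> \bar R) (x : 'I_n -> R) (i : 'I_n) : \bar R :=
  \big[Order.min/+oo]_(k < p | V i k != -oo)
     (- V i k + \big[Order.max/-oo]_(j < n | j != i) (V j k + (x j)%:E)).

Definition Tsig (V : 'I_n -> 'I_p -> \bar R) (sigma : 'I_n -> 'I_p)
    (x : 'I_n -> R) (i : 'I_n) : \bar R :=
  - V i (sigma i) + \big[Order.max/-oo]_(j < n | j != i) (V j (sigma i) + (x j)%:E).

End TropDefs.

(* Main.v *)
Require Import Defs.
From HB Require Import structures.
From mathcomp Require Import all_boot all_order all_algebra.
From mathcomp Require Import boolp classical_sets reals constructive_ereal ereal.
From mathcomp Require Import ring lra.
Import Order.TTheory GRing.Theory Num.Theory.
Local Open Scope classical_set_scope.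
Local Open Scope ereal_scope.

Ltac ecases := rewrite /=; rewrite -?EFinD ?lee_fin ?leey ?leNye //.
Lemma efin_cases (R : realType) (x : \bar R) : x != +oo -> x = -oo \/ exists r, x = r%:E.
Proof. case: x => [r| |] //; by [right; exists r | left]. Qed.

Lemma distH_sector (R : realType) n (a : 'I_n -> R) (v : 'I_n -> \bar R) (i : 'I_n) (r : R) :
  (forall j, v j != +oo) -> v i = r%:E -> sector a i v ->
  distH v (trop_hyp a) = (r + a i)%:E - \big[Order.max/-oo]_(j < n | j != i) (v j + (a j)%:E).
Proof.
move=> Hv Hvi Hs.
set M := \big[Order.max/-oo]_(j < n | j != i) (v j + (a j)%:E).
have HM : M <= (r + a i)%:E.
  by apply: bigmax_le => [|j _]; [exact: leNye | rewrite EFinD -Hvi; exact: Hs].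
apply/eqP; rewrite eq_le; apply/andP; split.
- case: (@efin_cases R M) => [|HMoo|[m Hm]].
  + by apply: contraTneq HM => ->.
  + by rewrite HMoo /= leey.
  have [j2 Hj2 Ej2] : exists2 j2, j2 != i & M = v j2 + (a j2)%:E.
    case: (pickP (fun j : 'I_n => j != i)) => [j Hj|H0].
      have [j2 Hj2 E] := @eq_bigmax _ _ _ -oo j (fun j => j != i) (fun j => v j + (a j)%:E) Hj (fun k _ => leNye _).
      by exists j2.
    by move: Hm; rewrite /M big_pred0.
  have gge : (0 <= r + a i - m)%R by move: HM; rewrite Hm lee_fin; lra.
  set g := (r + a i - m)%R.
  rewrite Hm -EFinB -/g.
  pose y := fun j => if j == i then (r - g)%:E else v j.
  have HB : \big[Order.max/-oo]_(j < n) ((a j)%:E + y j) = m%:E.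
    rewrite (bigD1 i) //= /y eqxx.
    rewrite (eq_bigr (fun j => v j + (a j)%:E)); last by move=> j /negPf ->; rewrite addeC.
    rewrite -/M Hm -EFinD.
    have -> : (a i + (r - g))%R = m by rewrite /g; ring.
    by rewrite maxxx.
  apply: (@le_trans _ _ (hilbert v y)).
    apply: ereal_inf_lbound; exists y => //; split.
      by move=> j; rewrite /rmax_elt /y; case: ifP => // _; exact: Hv.
    exists i, j2; split; first by rewrite eq_sym.
    split; rewrite HB /y.
      by rewrite eqxx -EFinD; congr EFin; rewrite /g; ring.
    by rewrite (negPf Hj2) addeC -Ej2 Hm.
  apply: ereal_inf_lbound; exists g, 0%R; split; last by rewrite subr0.
  move=> j; rewrite /y; case: eqP => [->|_].
    by rewrite Hvi -!EFinD !lee_fin /g; split; move: gge; lra.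
  by rewrite add0e; split => //; exact: leeDr.
- apply: le_ereal_inf_tmp => _ [y [Hyf [i1 [i2 [Hne [E1 E2]]]]] <-].
  apply: le_ereal_inf_tmp => _ [lam [mu [Hc ->]]].
  set B := \big[Order.max/-oo]_(j < n) ((a j)%:E + y j) in E1 E2.
  have [m [Hmi Em]] : exists m, m != i /\ (a m)%:E + y m = B.
    case: (eqVneq i1 i) => [e|h]; last by exists i1.
    by exists i2; split => //; rewrite -e eq_sym.
  have h1 := (Hc i).2.
  have h2 := (Hc m).1.
  have h3 : (a i)%:E + y i <= B by exact: (le_bigmax _ (fun j => ((a j)%:E + y j)%E) i).
  have h4 : v m + (a m)%:E <= M by exact: (@le_bigmax_cond _ _ _ _ m (fun j => j != i) (fun j => (v j + (a j)%:E)%E) Hmi).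
  rewrite Hvi in h1.
  case: (@efin_cases R (y i) (Hyf i)) => [E|[yi E]]; rewrite E in h1 h3.
    by move: h1; rewrite addeNy leeNy_eq.
  case: (@efin_cases R (y m) (Hyf m)) => [E'|[ym E']]; rewrite E' in h2 Em.
    by move: h3; rewrite -Em addeNy -EFinD leeNy_eq.
  case: (@efin_cases R (v m) (Hv m)) => [E''|[vm E'']]; rewrite E'' in h2 h4.
    by move: h2; rewrite -EFinD leeNy_eq.
  have HM' : M != +oo by apply: contraTneq HM => ->.
  case: (@efin_cases R M HM') => [E3|[mm E3]]; rewrite E3 in h4 *.
    by move: h4; rewrite -EFinD leeNy_eq.
  rewrite -Em in h3.
  rewrite -!EFinD !lee_fin in h1 h2 h3 h4 *.
  lra.
Qed.


Lemma A1 (R : realType) (r ai : R) (L M : \bar R) : L <= 0 -> M != +oo ->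
  M <= (r + ai)%:E -> L + ai%:E <= - r%:E + M -> (r + ai)%:E - M <= - L.
Proof.
case: L => [l| |]; case: M => [mm| |] //= => H1 H2; ecases; try (move=> *; lra).
Qed.

Lemma A2 (R : realType) (r ai : R) (L M : \bar R) : L <= 0 -> M != +oo ->
  L + ai%:E = - r%:E + M -> M <= (r + ai)%:E /\ (r + ai)%:E - M = - L.
Proof.
case: L => [l| |]; case: M => [mm| |] //= => H1 H2; ecases.
move: H1; rewrite lee_fin => H1 [H3]; split; [lra| congr EFin; lra].
Qed.

Lemma A3 (R : realType) (r ai : R) (L M : \bar R) : L <= 0 ->
  M <= (r + ai)%:E -> (r + ai)%:E - M = - L -> L + ai%:E = - r%:E + M.
Proof.
case: L => [l| |]; case: M => [mm| |] //= => H1; ecases.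
move: H1; rewrite lee_fin => H1 H2 [H3]; congr EFin; lra.
Qed.

Lemma bigmax_noty (R : realType) (I : finType) (P : pred I) (F : I -> \bar R) :
  (forall i, F i != +oo) -> \big[Order.max/-oo]_(i | P i) F i != +oo.
Proof.
move=> HF; elim/big_ind: _ => //.
by move=> x y hx hy; rewrite /Order.max; case: ifP.
Qed.

Lemma inrad_ge0 (R : realType) n p (V : 'I_n -> 'I_p -> \bar R) :
  inrad V != -oo -> 0 <= inrad V.
Proof.
rewrite /inrad => H.
have [[r [Hr0 Hr]]|Hno] := pselect (exists r : R, (0 <= r)%R /\ exists c : 'I_n -> R,
      forall x, hball c r x -> trop_cone V (embv x)).
  apply: (@le_trans _ _ r%:E); first by rewrite lee_fin.
  by apply: ereal_sup_ubound; exists r.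
exfalso; move/eqP: H => H; apply: H; apply: (proj2 (ereal_sup_ninfty _)) => _ [r Hr <-].
by exfalso; apply: Hno; exists r.
Qed.

Theorem proposition4p10 (R : realType) (n p : nat)
  (V : 'I_n -> 'I_p -> \bar R)
  (HVmax : forall i k, rmax_elt (V i k))
  (Hcol : forall k : 'I_p, exists i : 'I_n, V i k != -oo)
  (Hrow : forall i : 'I_n, exists k : 'I_p, V i k != -oo)
  (a : 'I_n -> R)
  (Ha : forall i, Top V a i = - inrad V + (a i)%:E)
  (sigma : 'I_n -> 'I_p)
  (Hsigma : forall i, V i (sigma i) != -oo) :
  (forall i, Top V a i = Tsig V sigma a i) <->
  (forall i, sector a i (vcol V (sigma i)) /\
     distH (vcol V (sigma i)) (trop_hyp a) = distH_set (vcols V) (trop_hyp a)).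
Proof.
set L := - inrad V.
pose Mx i k := \big[Order.max/-oo]_(j < n | j != i) (V j k + (a j)%:E).
have Mnoty : forall i k, Mx i k != +oo.
  move=> i k; apply: bigmax_noty => j.
  case: (@efin_cases R (V j k) (HVmax j k)) => [->|[r ->]] //.
have Tle : forall i k, V i k != -oo -> Top V a i <= - V i k + Mx i k.
  by move=> i k Hk; exact: (@bigmin_le_cond _ _ _ +oo k (fun k => V i k != -oo) (fun k => - V i k + Mx i k) Hk).
have Tatt : forall i, exists2 k, V i k != -oo & Top V a i = - V i k + Mx i k.
  move=> i; have [k0 Hk0] := Hrow i.
  have [k Hk E] := @eq_bigmin _ _ _ +oo k0 (fun k => V i k != -oo) (fun k => - V i k + Mx i k) Hk0 (fun _ _ => leey _).
  by exists k.
have HVr : forall i k, V i k != -oo -> exists r, V i k = r%:E.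
  move=> i k Hk; case: (@efin_cases R (V i k) (HVmax i k)) => [E|//].
  by rewrite E in Hk.
have HL : forall i : 'I_n, L <= 0.
  move=> i; have [k Hk E] := Tatt i; have [r Er] := HVr _ _ Hk.
  have Hfin : Top V a i != +oo.
    rewrite E Er; case: (@efin_cases R (Mx i k) (Mnoty i k)) => [->|[m ->]] //.
  rewrite Ha -/L in Hfin.
  have Hinr : inrad V != -oo.
    by apply: contraNneq Hfin; rewrite /L => ->.
  by rewrite /L oppe_le0; exact: inrad_ge0.
have sector_of_M : forall i k r, V i k = r%:E -> Mx i k <= (r + a i)%:E ->
    sector a i (vcol V k).
  move=> i k r Er HM j; rewrite /vcol; case: (eqVneq j i) => [->|h] //.
  rewrite Er -EFinD; apply: (le_trans _ HM).
  exact: (@le_bigmax_cond _ _ _ _ j (fun j => j != i) (fun j => (V j k + (a j)%:E)%E) h).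
have M_of_sector : forall i k r, V i k = r%:E -> sector a i (vcol V k) ->
    Mx i k <= (r + a i)%:E.
  move=> i k r Er Hs; apply: bigmax_le => [|j _]; first exact: leNye.
  by rewrite EFinD -Er; exact: Hs.
have HD : forall i : 'I_n, distH_set (vcols V) (trop_hyp a) = - L.
  move=> i0; have HL0 := HL i0; apply/eqP; rewrite eq_le; apply/andP; split.
  - apply: ge_ereal_sup => _ [_ [k _ <-] <-].
    have [i1 Hi1] := Hcol k.
    have [j0 _ Ej0] := @eq_bigmax _ _ _ -oo i1 xpredT (fun j => (V j k + (a j)%:E)%E) isT (fun _ _ => leNye _).
    have Hs : sector a j0 (vcol V k).
      by move=> j; rewrite /vcol -Ej0; exact: (le_bigmax _ (fun j => (V j k + (a j)%:E)%E) j).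
    have Hj0 : V j0 k != -oo.
      apply: contraNneq Hi1 => E0; move: Ej0; rewrite E0 addNye => Eb.
      have := le_bigmax -oo (fun j => (V j k + (a j)%:E)%E) i1.
      rewrite Eb leeNy_eq => /eqP.
      by case: (@efin_cases R (V i1 k) (HVmax i1 k)) => [->|[r ->]].
    have [r Er] := HVr _ _ Hj0.
    rewrite (@distH_sector R n a (vcol V k) j0 r (fun j => HVmax j k) Er Hs).
    apply: A1 => //; first exact: Mnoty.
      exact: M_of_sector Er Hs.
    by rewrite -/L -Ha -Er; exact: Tle.
  - have [k Hk E] := Tatt i0; have [r Er] := HVr _ _ Hk.
    rewrite Ha Er in E; have [HMle Hd] := @A2 R r (a i0) L (Mx i0 k) HL0 (Mnoty i0 k) E.
    have Hs := sector_of_M _ _ _ Er HMle.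
    apply: (@le_trans _ _ (distH (vcol V k) (trop_hyp a))).
      by rewrite (@distH_sector R n a (vcol V k) i0 r (fun j => HVmax j k) Er Hs) Hd.
    by apply: ereal_sup_ubound; exists (vcol V k) => //; exists k.
split => [HP i | HQ i].
- have [r Er] := HVr _ _ (Hsigma i).
  have := HP i; rewrite Ha /Tsig Er => E.
  have [HMle Hd] := @A2 R r (a i) L _ (HL i) (Mnoty i _) E.
  have Hs := sector_of_M _ _ _ Er HMle.
  split => //.
  by rewrite (@distH_sector R n a (vcol V (sigma i)) i r (fun j => HVmax j _) Er Hs) (HD i).
- have [Hs Hd] := HQ i.
  have [r Er] := HVr _ _ (Hsigma i).
  rewrite (@distH_sector R n a (vcol V (sigma i)) i r (fun j => HVmax j _) Er Hs) (HD i) in Hd.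
  have HMle := M_of_sector _ _ _ Er Hs.
  rewrite Ha /Tsig Er.
  exact: (@A3 R r (a i) L _ (HL i) HMle Hd).
Qed.
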